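(* Let $U,V\in GL_n(\mathbb{C})$ and let $D$ be a diagonal $n\times n$ complex matrix. If every principal minor of $VU$ equals $1$, then the Newton polygons of $D$ and $UDV$ coincide.
   Context: For an $n\times n$ complex matrix $M$ with eigenvalues $\mu_1,\dots,\mu_n$ ordered so that $|\mu_1|\ge\dots\ge|\mu_n|$, the Newton polygon of $M$ is the polygonal line joining the points $(-n+k,\, s_1+\dots+s_k)$ for $k=0,\dots,n$, where $s_j=-\log|\mu_j|$ (with values in $\mathbb{R}\cup\{+\infty\}$). *)

(* Defs.v *)
From HB Require Import structures.
From mathcomp Require Import all_boot all_order all_algebra.
From mathcomp Require Import complex.
From mathcomp Require Import reals constructive_ereal exp.
Set Implicit Arguments. Unset Strict Implicit. Unset Printing Implicit Defensive.
Import Order.TTheory GRing.Theory Num.Theory.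
Local Open Scope ring_scope.

Section NewtonPolygon.
Variable R : realType.
Local Notation C := (R[i]).

Definition eigen_list n (M : 'M[C]_n) : seq C :=
  sval (closed_field_poly_normal (char_poly M)).

Definition eigenvalues_sorted n (M : 'M[C]_n) : seq C :=
  sort (fun x y : C => `|y| <= `|x|) (eigen_list M).

Definition neglogabs (mu : C) : \bar R :=
  if mu == 0 then +oo%E else (- ln (complex.Re `|mu|))%:E.

(* s_j (j = 1..n), stored 0-indexed. *)
Definition newton_s n (M : 'M[C]_n) (j : nat) : \bar R :=
  neglogabs (nth 0 (eigenvalues_sorted M) j).

(* The Newton polygon of M: the polygonal line joining the points
   (-n + k, s_1 + ... + s_k), k = 0..n, represented by its list of vertices. *)
Definition newton_polygon n (M : 'M[C]_n) : seq (R * \bar R) :=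
  [seq (k%:R - n%:R, (\sum_(j < k) newton_s M j)%E) | k <- iota 0 n.+1].

Definition principal_minor n (M : 'M[C]_n) (S : {set 'I_n}) : C :=
  \det (\matrix_(i < #|S|, j < #|S|)
          M (@enum_val _ (mem S) i) (@enum_val _ (mem S) j)).

End NewtonPolygon.

(* Main.v *)
Require Import Defs.
From HB Require Import structures.
From mathcomp Require Import all_boot all_order all_algebra.
From mathcomp Require Import complex.
From mathcomp Require Import reals constructive_ereal exp.
From mathcomp Require Import fingroup perm.
Set Implicit Arguments. Unset Strict Implicit. Unset Printing Implicit Defensive.
Import Order.TTheory GRing.Theory Num.Theory.
Local Open Scope ring_scope.

Lemma det_castmx (F : comNzRingType) m m' (e : m = m') (A : 'M[F]_m) :
  \det (castmx (e, e) A) = \det A.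
Proof. by case: m' / e; rewrite castmx_id. Qed.

Lemma det_Nmat (F : comNzRingType) n (M : 'M[F]_n) (S : {set 'I_n}) :
  \det (\matrix_(i, j) if i \in S then M i j else (i == j)%:R) =
  \det (\matrix_(i < #|S|, j < #|S|) M (@enum_val _ (mem S) i) (@enum_val _ (mem S) j)).
Proof.
set N := \matrix_(i, j) _.
set k := #|S|.
have hk : (k + (n - k) = n)%N by rewrite subnKC //; have := max_card (mem S); rewrite card_ord.
have hc : (n - k = #|~: S|)%N.
  by rewrite cardsCs setCK card_ord.

pose f := fun x : 'I_(k + (n - k)) =>
  match fintype.split x return 'I_n with
  | inl i => @enum_val _ (mem S) i
  | inr j => @enum_val _ (mem (~: S)) (cast_ord hc j) end.
have fl i : f (lshift (n - k) i) = enum_val i.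
  by rewrite /f (unsplitK (inl _ i)).
have fr j : f (rshift k j) = @enum_val _ (mem (~: S)) (cast_ord hc j).
  by rewrite /f (unsplitK (inr _ j)).
have finj : injective f.
  move=> x y; rewrite -[x]splitK -[y]splitK.
  case: (split x) => [i|j]; case: (split y) => [i'|j'] /=;
    rewrite ?fl ?fr.
  - by move/enum_val_inj ->.
  - move=> e; have := enum_valP (cast_ord hc j'); rewrite -e inE.
    by rewrite (enum_valP i).
  - move=> e; have := enum_valP (cast_ord hc j); rewrite e inE.
    by rewrite (enum_valP i').
  - by move/enum_val_inj/cast_ord_inj ->.
pose g (x : 'I_n) := f (cast_ord (esym hk) x).
have ginj : injective g by move=> x y /finj /cast_ord_inj.
pose p := perm ginj.
have pE (e : (k + (n - k) = n)%N) x : p (cast_ord e x) = f x.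
  by rewrite permE /g; congr f; apply: val_inj.
have -> : \det N = \det (castmx (esym hk, esym hk) (row_perm p (col_perm p N))).
  by rewrite det_castmx row_permE col_permE !det_mulmx !det_perm odd_permV mulrCA -expr2 sqrr_sign mulr1.
set Q := castmx _ _.
rewrite -(submxK Q).
have -> : dlsubmx Q = 0.
  apply/matrixP => j i; rewrite !mxE castmxE !mxE !pE fr fl.
  have := enum_valP (cast_ord hc j); rewrite inE => /negbTE ->.
  case: eqP => // e; have := enum_valP i; rewrite -e.
  by have := enum_valP (cast_ord hc j); rewrite inE => /negbTE ->.
have -> : drsubmx Q = 1%:M.
  apply/matrixP => j j'; rewrite !mxE castmxE !mxE !pE !fr.
  have := enum_valP (cast_ord hc j); rewrite inE => /negbTE ->.
  by rewrite (inj_eq enum_val_inj) (inj_eq (@cast_ord_inj _ _ _)).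
rewrite det_ublock det1 mulr1; congr (\det _).
apply/matrixP => i j; rewrite !mxE castmxE !mxE !pE !fl.
by rewrite (enum_valP i).
Qed.
Lemma det_add_rows (F : comNzRingType) n (A B : 'M[F]_n) :
  \det (A + B) = \sum_(S : {set 'I_n}) \det (\matrix_(i, j) if i \in S then A i j else B i j).
Proof.
rewrite /determinant.
under eq_bigr => s _.
  rewrite (eq_bigr (fun i => A i (s i) + B i (s i))); last by move=> i _; rewrite mxE.
  rewrite (bigA_distr _ _ (fun i => A i (s i)) (fun i => B i (s i))) big_distrr /=.
  over.
rewrite exchange_big /=; apply: eq_bigr => S _; apply: eq_bigr => s _.
by congr (_ * _); apply: eq_bigr => i _; rewrite mxE.
Qed.

Lemma char_poly_DM (R : realType) n (D M : 'M[R[i]]_n) : is_diag_mx D ->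
  char_poly (D *m M) = \sum_(S : {set 'I_n})
     (\prod_i (if i \in S then - (D i i)%:P else 'X)) * (principal_minor M S)%:P.
Proof.
move=> /is_diag_mxP Dd.
have DM i j : \sum_k D i k * M k j = D i i * M i j.
  rewrite (bigD1 i) //= big1 ?addr0 // => k hk.
  by rewrite Dd ?mul0r // eq_sym.
rewrite /char_poly /char_poly_mx addrC det_add_rows; apply: eq_bigr => S _.
pose c := \row_i (if i \in S then - (D i i)%:P else 'X).
have -> : (\matrix_(i, j) (if i \in S then (- map_mx polyC (D *m M)) i j
              else ('X%:M : 'M[{poly R[i]}]_n) i j)) =
   diag_mx c *m map_mx polyC (\matrix_(i, j) if i \in S then M i j else (i == j)%:R).
  apply/matrixP => i j; rewrite mul_diag_mx !mxE.
  case: (i \in S); first by rewrite DM polyCM mulNr.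
  by rewrite polyC_natr mulr_natr.
rewrite det_mulmx det_diag det_map_mx det_Nmat; congr (_ * _).
by apply: eq_bigr => i _; rewrite mxE.
Qed.

Lemma char_poly_conj (F : comNzRingType) n (U W A : 'M[F]_n) :
  U *m W = 1%:M -> char_poly (U *m A *m W) = char_poly A.
Proof.
move=> UW; rewrite /char_poly /char_poly_mx.
have UW' : map_mx polyC U *m map_mx polyC W = 1%:M by rewrite -map_mxM UW map_mx1.
have -> : 'X%:M - map_mx polyC (U *m A *m W) =
   map_mx polyC U *m ('X%:M - map_mx polyC A) *m map_mx polyC W.
  rewrite mulmxBr mulmxBl !map_mxM; congr (_ - _).
  by rewrite mul_mx_scalar -scalemxAl UW' scalemx1.
by rewrite !det_mulmx mulrAC -det_mulmx UW' det1 mul1r.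
Qed.

Theorem proposition4p5 (R : realType) (n : nat) (U V D : 'M[R[i]]_n) :
  U \in unitmx -> V \in unitmx -> is_diag_mx D ->
  (forall S : {set 'I_n}, principal_minor (V *m U) S = 1) ->
  newton_polygon D = newton_polygon (U *m D *m V).
Proof.
move=> Uu Vu Dd Hm.
have HH : char_poly (U *m D *m V) = char_poly D.
  have -> : U *m D *m V = U *m (D *m (V *m U)) *m invmx U by rewrite !mulmxA mulmxK.
  rewrite char_poly_conj; last exact: mulmxV.
  rewrite -{2}(mulmx1 D) !char_poly_DM //; apply: eq_bigr => S _.
  rewrite Hm; congr (_ * (_ %:P)).
  rewrite /principal_minor -det_Nmat; transitivity (\det (1%:M : 'M[R[i]]_n)); first by rewrite det1.
  congr (\det _).
  by apply/matrixP => i j; rewrite !mxE; case: (i \in S).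
by rewrite /newton_polygon /newton_s /eigenvalues_sorted /eigen_list HH.
Qed.
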